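(* Let $n\ge2$, let $X\subseteq\mathbb{N}$ be finite and let $P:[X]^2\to n$ be a colouring. Then: (1) for every $m\in\mathbb{N}$, $|\{x\in X:|\sigma_x|\le m\}|\le n^m$; (2) for every $x\in X\setminus\{\min X\}$ and every $c\in\mathrm{col}(\sigma_x)$, $\min\mathrm{ho}(\sigma_x,c)\le\sigma_x^-(|\sigma_x^-|-1)$ (the last entry of $\sigma_x^-$).
   Context: Pairs in $[X]^2$ are $(x,y)$ with $x<y$. For $x\in X$, the hereditarily minimal prehomogeneous sequence $\sigma_x$ (a finite increasing sequence of elements of $X$) is defined by $\sigma_x(0)=\min X$ and $\sigma_x(i+1)=\min\{y\in X: y>\sigma_x(i)\text{ and }P(\sigma_x(j),x)=P(\sigma_x(j),y)\text{ for all }j\le i\}$, the construction stopping at the first $i$ with $\sigma_x(i)=x$ (so $x$ is the last entry of $\sigma_x$). For $c<n$, $\mathrm{ho}(\sigma_x,c)=\{\sigma_x(i): i<|\sigma_x|-1,\ P(\sigma_x(i),x)=c\}$, and $\mathrm{col}(\sigma_x)=\{c<n:\mathrm{ho}(\sigma_x,c)\ne\emptyset\}$. Every proper nonempty initial segment of $\sigma_x$ equals $\sigma_y$ for some $y<x$ in $X$. For $x\in X\setminus\{\min X\}$, $\sigma_x^-$ denotes the longest proper initial segment $\sigma_y\subsetneq\sigma_x$ such that $\mathrm{col}(\sigma_y)\subsetneq\mathrm{col}(\sigma_x)$. *)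

(* Defs.v *)
From mathcomp Require Import all_boot all_order.
From mathcomp Require Import finmap.
Set Implicit Arguments. Unset Strict Implicit. Unset Printing Implicit Defensive.
Local Open Scope fset_scope.

Definition seqmin (s : seq nat) : nat := foldr minn (head 0 s) s.

Section HMPS.
Variables (n : nat) (X : {fset nat}) (P : nat -> nat -> 'I_n).
(* P is the colouring; only its values P a b with a < b, a b \in X matter. *)

Definition minX : nat := seqmin X.

Fixpoint sigma_aux (x : nat) (fuel : nat) (s : seq nat) : seq nat :=
  match fuel with
  | 0 => s
  | f.+1 =>
    if last 0 s == x then s else
    let cands := [seq y <- enum_fset X |
                   (last 0 s < y) && all (fun j => P j x == P j y) s] in
    if cands is [::] then s else sigma_aux x f (rcons s (seqmin cands))
  end.

(* hereditarily minimal prehomogeneous sequence sigma_x (for x \in X);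
   fuel #|X| suffices since entries are distinct elements of X *)
Definition sigma (x : nat) : seq nat := sigma_aux x #|` X| [:: minX].

(* for a nonempty sequence s (thought of as sigma_y, y = last entry):
   ho(s,c) = entries s(i), i < |s|-1, with P(s(i), y) = c *)
Definition ho (s : seq nat) (c : 'I_n) : seq nat :=
  [seq a <- belast (head 0 s) (behead s) | P a (last 0 s) == c].

Definition col (s : seq nat) : {set 'I_n} := [set c | ho s c != [::]].

Definition sigma_minus (x : nat) : seq nat :=
  let s := sigma x in
  let ks := [seq k <- iota 1 (size s).-1 | col (take k s) \proper col s] in
  take (last 1 ks) s.

End HMPS.

(* Main.v *)
Require Import Defs.
From mathcomp Require Import all_boot all_order.
From mathcomp Require Import finmap.
Local Open Scope fset_scope.

Lemma seqmin_le s a : a \in s -> seqmin s <= a.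
Proof.
rewrite /seqmin; move: (head 0 s) => d.
elim: s => [|b t IH] //=; rewrite inE => /orP [/eqP -> | /IH h].
  exact: geq_minl.
exact: leq_trans (geq_minr _ _) h.
Qed.

Lemma seqmin_mem s : s != [::] -> seqmin s \in s.
Proof.
case: s => [|a t] // _; rewrite /seqmin /=.
have: forall d u, foldr minn d u = d \/ foldr minn d u \in u.
  move=> d; elim=> [|b u IH] /=; first by left.
  rewrite /minn; case: ifP => _; first by right; rewrite inE eqxx.
  by case: IH => [->|h]; [left | right; rewrite inE h orbT].
move=> H; rewrite /minn; case: ifP => _; first by rewrite inE eqxx.
by case: (H a t) => [->|h]; rewrite inE ?eqxx // h orbT.
Qed.

Arguments seqmin_le {s a}.
Arguments seqmin_mem {s}.
Section Aux.
Variables (n : nat) (X : {fset nat}) (P : nat -> nat -> 'I_n) (x : nat).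
Hypothesis xX : x \in X.

Definition cands (s : seq nat) i := [seq y <- enum_fset X |
   (nth 0 s i < y) && all (fun j => P j x == P j y) (take i.+1 s)].

Definition Inv s := forall i, i.+1 < size s ->
  cands s i != [::] /\ nth 0 s i.+1 = seqmin (cands s i).

Lemma cands_rcons s y i : i < size s -> cands (rcons s y) i = cands s i.
Proof.
move=> hi; rewrite /cands nth_rcons hi -cats1 takel_cat //.
Qed.

Lemma aux f s : s != [::] -> Inv s -> sorted ltn s -> all (mem X) s ->
  last 0 s <= x -> #|`X| < f + size s ->
  [/\ Inv (sigma_aux X P x f s), last 0 (sigma_aux X P x f s) = x,
      sorted ltn (sigma_aux X P x f s) & exists t, sigma_aux X P x f s = s ++ t].
Proof.
elim: f s => [|f IH] s hs hI hsort hall hle hsz /=.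
  have hu : uniq s by apply: sorted_uniq hsort; [exact: ltn_trans | exact: ltnn].
  have := uniq_leq_size hu (s2 := enum_fset X) (fun a ha => (allP hall) a ha).
  by rewrite leqNgt hsz.
case: eqP => [hx | hx]; first by split => //; exists [::]; rewrite cats0.
set cs := [seq y <- enum_fset X | _].
have xin : x \in cs.
  rewrite mem_filter xX andbT ltn_neqAle hle andbT.
  apply/andP; split; first by apply/eqP.
  by apply/allP => j _.
have csn : cs != [::] by apply/negP => /eqP e; rewrite e in xin.
set y := seqmin cs.
have yin : y \in cs by exact: seqmin_mem.
move: (yin); rewrite mem_filter => /andP [/andP [hly _] hyX].
have [I' L' S' [t ht]] : [/\ Inv (sigma_aux X P x f (rcons s y)),
   last 0 (sigma_aux X P x f (rcons s y)) = x,
   sorted ltn (sigma_aux X P x f (rcons s y)) &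
   exists t, sigma_aux X P x f (rcons s y) = rcons s y ++ t].
  apply: IH.
  - by case: (s).
  - move=> i; rewrite size_rcons ltnS leq_eqVlt => /orP [/eqP hi | hi].
      have hi' : i < size s by rewrite -hi.
      have E : cands s i = cs.
        rewrite /cands /cs hi take_size; apply: eq_filter => z.
        by rewrite -nth_last -hi.
      by rewrite cands_rcons // nth_rcons -hi ltnn eqxx E.
    rewrite cands_rcons ?(ltnW hi) // nth_rcons hi; exact: hI.
  - case: (s) hsort hly => [|a u] //=; rewrite rcons_path => -> /= h.
    by [].
  - by rewrite all_rcons hall andbT.
  - by rewrite last_rcons; apply: seqmin_le.
  - by rewrite size_rcons addnS -addSn.
move: I' L' S' ht; rewrite /y; clear yin xin hly hyX; clear y.
case: cs csn => [|a l] //= _ I' L' S' ht.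
split => //; exists (seqmin (a :: l) :: t); by rewrite ht cat_rcons.
Qed.
End Aux.
Arguments Inv {n}.
Arguments cands {n}.

Lemma sigma_props (n : nat) (X : {fset nat}) (P : nat -> nat -> 'I_n) (x : nat) : x \in X ->
  [/\ Inv X P x (sigma X P x), last 0 (sigma X P x) = x,
      sorted ltn (sigma X P x) & exists t, sigma X P x = minX X :: t].
Proof.
move=> xX.
have hne : enum_fset X != [::] by apply/negP => /eqP e; rewrite -[_ \in _]/(x \in enum_fset X) e in xX.
have [I L S [t ht]] := @aux n X P x xX #|`X| [:: minX X] isT
  (fun i (hi : i.+1 < 1) => False_ind _ (notF hi)) isT
  (ltac:(rewrite /= andbT; exact: seqmin_mem hne)) (seqmin_le xX)
  (ltac:(by rewrite addn1)).
by split => //; exists t.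
Qed.

Lemma preh (n : nat) (X : {fset nat}) (P : nat -> nat -> 'I_n) (x : nat) s j k : Inv X P x s -> j < k -> k < size s ->
  P (nth 0 s j) x = P (nth 0 s j) (nth 0 s k).
Proof.
case: k => [|k] // hI hjk hk.
have [hne heq] := hI k hk.
have := seqmin_mem hne; rewrite -heq mem_filter => /andP [/andP [_ /allP hall] _].
apply/eqP; apply: hall.
rewrite -(nth_take 0 hjk); apply: mem_nth.
by rewrite size_takel // ltnW.
Qed.

Arguments preh {n X P x s j k}.

Lemma ho_eq (n : nat) (P : nat -> nat -> 'I_n) (s : seq nat) (c : 'I_n) : s != [::] ->
  ho P s c = [seq a <- take (size s).-1 s | P a (last 0 s) == c].
Proof.
case: s => [|b t] // _; rewrite /ho /=.
congr filter.
rewrite [in RHS](lastI b t) -cats1 take_size_cat //.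
by rewrite size_belast.
Qed.

Lemma col_has (n : nat) (P : nat -> nat -> 'I_n) (s : seq nat) (c : 'I_n) : s != [::] ->
  (c \in col P s) = has (fun a => P a (last 0 s) == c) (take (size s).-1 s).
Proof. by move=> hs; rewrite inE ho_eq // has_filter. Qed.

Lemma col_take (n : nat) (X : {fset nat}) (P : nat -> nat -> 'I_n) (x : nat) s k (c : 'I_n) : Inv X P x s -> 0 < k -> k < size s ->
  (c \in col P (take k s)) = has (fun a => P a x == c) (take k.-1 s).
Proof.
move=> hI hk hks.
have hsz : size (take k s) = k by rewrite size_takel // ltnW.
rewrite col_has; last by rewrite -size_eq0 hsz -lt0n.
rewrite hsz take_takel ?leq_pred //.
have -> : last 0 (take k s) = nth 0 s k.-1.
  by rewrite -nth_last hsz nth_take // prednK.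
apply: eq_in_has => a /(nthP 0) [i hi <-].
have hi' : i < k.-1 by move: hi; rewrite size_takel // ltnW // (leq_ltn_trans (leq_pred k)).
rewrite nth_take //; congr (_ == c).
rewrite (preh hI hi') //.
by rewrite (leq_ltn_trans (leq_pred k)).
Qed.

Arguments col_take {n X P x s k} c.

Lemma last_max (l : seq nat) k : sorted leq l -> k \in l -> k <= last 1 l.
Proof.
case: l => [|a l] //=.
elim: l a k => [|b l IH] a k /=; first by rewrite inE => _ /eqP ->.
move=> /andP [hab hp]; rewrite inE => /orP [/eqP -> | hk].
  exact: leq_trans hab (IH b b hp (mem_head _ _)).
by apply: IH.
Qed.

Lemma part2 (n : nat) (X : {fset nat}) (P : nat -> nat -> 'I_n) :
  (forall x : nat, x \in X -> x != minX X ->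
   forall c : 'I_n, c \in col P (sigma X P x) ->
     seqmin (ho P (sigma X P x) c)
       <= nth 0 (sigma_minus X P x) (size (sigma_minus X P x)).-1).
Proof.
move=> x xX hx c hc.
have [hI hL hS [t ht]] := @sigma_props n X P x xX.
rewrite /sigma_minus /=.
move: hc; set s := sigma X P x in hI hL hS ht * => hc.
have hs2 : 1 < size s.
  rewrite ht /=; case: t ht => [|b t] // ht.
  by move: hL; rewrite ht /= => e; rewrite e eqxx in hx.
have hsne : s != [::] by rewrite -size_eq0 -lt0n ltnW.
set p := fun a => P a x == c.
set ws := take (size s).-1 s.
have hws : size ws = (size s).-1 by rewrite size_takel // leq_pred.
have hpws : has p ws by move: hc; rewrite col_has // hL.
set j0 := find p ws.
have hj0 : j0 < (size s).-1 by rewrite -hws -has_find.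
have hj0s : j0 < size s by rewrite (leq_trans hj0) // leq_pred.
have hj0s' : j0.+1 < size s by rewrite -(prednK (ltnW hs2)) ltnS.
set ks := [seq k <- iota 1 (size s).-1 | col P (take k s) \proper col P s].
have hks : j0.+1 \in ks.
  rewrite mem_filter mem_iota add1n ltnS ltnS hj0 andbT andbT.
  apply/properP; split.
    apply/subsetP => d; rewrite (col_take _ hI) // col_has // hL.
    case/hasP => a ha hpa; apply/hasP; exists a => //.
    rewrite /ws; move: ha; rewrite -(take_takel _ (ltnW hj0)); exact: mem_take.
  exists c => //.
  rewrite (col_take _ hI) //= /ws.
  have -> : take j0 s = take j0 ws by rewrite take_takel // ltnW.
  by rewrite has_take // ltnn.
set K := last 1 ks.
have hK : j0 < K.
  apply: (@last_max ks j0.+1 _ hks).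
  by apply: sorted_filter; [exact: leq_trans | exact: iota_sorted].
have hKs : K <= (size s).-1.
  have : K \in ks by rewrite /K; case: (ks) hks => [|a l] //= _; exact: mem_last.
  by rewrite mem_filter mem_iota add1n ltnS => /andP [_ /andP [_ ->]].
have hKs' : K < size s by apply: leq_ltn_trans hKs _; rewrite ltn_predL; exact: ltnW hs2.
rewrite (size_takel (ltnW hKs')) nth_take; last by rewrite prednK // (leq_ltn_trans _ hK).
apply: (@leq_trans (nth 0 s j0)).
  apply: seqmin_le; rewrite ho_eq // hL mem_filter -/ws.
  have := nth_find 0 hpws; rewrite -/j0 /p nth_take // => ->.
  by rewrite -(nth_take 0 hj0) -/ws mem_nth // hws.
move: hS; rewrite ltn_sorted_uniq_leq => /andP [_ hS].
apply: (sorted_leq_nth leq_trans leqnn 0 hS).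
- by rewrite inE.
- by rewrite inE; apply: leq_ltn_trans (leq_pred K) hKs'.
- by rewrite -ltnS prednK // (leq_ltn_trans _ hK).
Qed.

Lemma part1 (n : nat) (X : {fset nat}) (P : nat -> nat -> 'I_n) :
  2 <= n ->
  (forall m : nat,
     #|` [fset x in X | size (sigma X P x) <= m] | <= n ^ m).
Proof.
move=> hn m.
have h0 : 0 < n by apply: leq_trans hn.
set o0 := Ordinal h0; set o1 := Ordinal hn.
set A := [fset x in X | size (sigma X P x) <= m].
pose f x := [ffun i : 'I_m => if i < (size (sigma X P x)).-1 then P (nth 0 (sigma X P x) i) x
   else if (i : nat) == (size (sigma X P x)).-1 then o1 else o0].
have finj : {in enum_fset A &, injective f}.
  move=> x x'; rewrite -[x \in enum_fset A]/(x \in A) -[x' \in enum_fset A]/(x' \in A) !inE.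
  move=> /andP [xX hxm] /andP [xX' hxm'] hf.
  have hf' : forall i : 'I_m, f x i = f x' i by move=> i; rewrite hf.
  have [hI hL hS [t ht]] := @sigma_props n X P x xX.
  have [hI' hL' hS' [t' ht']] := @sigma_props n X P x' xX'.
  move: hf' hxm hxm'; rewrite /f.
  set s := sigma X P x in hI hL hS ht *; set s' := sigma X P x' in hI' hL' hS' ht' * => hf' hxm hxm'.
  have ham : (size s).-1 < m by move: hxm; rewrite ht.
  have ham' : (size s').-1 < m by move: hxm'; rewrite ht'.
  have ha : (size s).-1 = (size s').-1.
    case: (ltngtP (size s).-1 (size s').-1) => // hlt.
      have := hf' (Ordinal ham'); rewrite !ffunE /= ltnNge (ltnW hlt) /= (gtn_eqF hlt) ltnn eqxx.
      by move/(congr1 val).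
    have := hf' (Ordinal ham); rewrite !ffunE /= ltnn eqxx ltnNge (ltnW hlt) /= (gtn_eqF hlt).
    by move/(congr1 val).
  have hsz : size s = size s' by rewrite ht ht' /=; move: ha; rewrite ht ht' /= => ->.
  have hc : forall i, i < (size s).-1 -> P (nth 0 s i) x = P (nth 0 s' i) x'.
    move=> i hi; have := hf' (Ordinal (ltn_trans hi ham)); rewrite !ffunE /= hi -ha hi.
    by [].
  have htk : forall k, k <= size s -> take k s = take k s'.
    elim=> [|k IHk] hk; first by rewrite !take0.
    have hk' : k < size s' by rewrite -hsz.
    rewrite (take_nth 0 hk) (take_nth 0 hk') (IHk (ltnW hk)); congr rcons.
    clear hk'; case: k IHk hk => [|i] IHk hk; first by rewrite ht ht'.
    have [_ e] := hI i hk.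
    have [_ e'] := hI' i (ltac:(by rewrite -hsz)).
    rewrite e e'; congr seqmin; rewrite /cands.
    have ti : take i.+1 s = take i.+1 s' by apply: IHk; exact: ltnW.
    have hn' : forall j, j < i.+1 -> nth 0 s j = nth 0 s' j.
      by move=> j hj; rewrite -(nth_take 0 hj) ti nth_take.
    rewrite hn' // ti; apply: eq_filter => y; congr andb.
    apply: eq_in_all => j /(nthP 0) [j' hj' <-].
    have hi1 : i.+1 <= size s by exact: ltnW.
    rewrite size_takel -?hsz // in hj'.
    rewrite nth_take // -(hn' _ hj') hc //; first by rewrite (hn' _ hj').
    apply: leq_trans hj' _; rewrite -ltnS prednK //; exact: leq_ltn_trans (leq0n _) hk.
  have := htk _ (leqnn _); rewrite take_size hsz take_size => e.
  by rewrite -hL -hL' e.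
have : uniq (map f (enum_fset A)) by rewrite (map_inj_in_uniq finj) fset_uniq.
move/card_uniqP; rewrite size_map => <-.
by apply: leq_trans (max_card _) _; rewrite card_ffun !card_ord.
Qed.

Theorem lemma2p8 (n : nat) (X : {fset nat}) (P : nat -> nat -> 'I_n) :
  2 <= n ->
  (forall m : nat,
     #|` [fset x in X | size (sigma X P x) <= m] | <= n ^ m)
  /\
  (forall x : nat, x \in X -> x != minX X ->
   forall c : 'I_n, c \in col P (sigma X P x) ->
     seqmin (ho P (sigma X P x) c)
       <= nth 0 (sigma_minus X P x) (size (sigma_minus X P x)).-1).
Proof.
move=> hn; split; [exact: part1 | exact: part2].
Qed.
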